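(* Let $G$ be a finite subset of $\mathbf M$ with $\{(\mathbf e_1,f_1),\dots,(\mathbf e_m,f_m)\}\subset G$, and let $(\mathbf u,f)\in\mathbf M$. Suppose that for every critical pair $[t_g(\mathbf v,g),t_h(\mathbf w,h)]$ of $G$ with $\mathrm{lpp}(\mathbf u)\succeq\mathrm{lpp}(t_g\mathbf v)$, the S-polynomial of this critical pair has a standard representation w.r.t. $G$. Then $(\mathbf u,f)$ has a standard representation w.r.t. $G$.
   Context: Let $R=K[x_1,\dots,x_n]$ over a field $K$, $f_1,\dots,f_m\in R$, $\mathbf f=(f_1,\dots,f_m)$, $\mathbf e_i$ the $i$-th unit vector of $R^m$, and $\mathbf M=\{(\mathbf u,f)\in R^m\times R:\mathbf u\cdot\mathbf f=f\}$. Fix an arbitrary term order $\prec$ on the power products of $R$ and an arbitrary term order $\prec$ on the terms $x^\alpha\mathbf e_i$ of $R^m$. $\mathrm{lpp}$ denotes leading power product (leading term for vectors), $\mathrm{lc}$ leading coefficient; $\mathrm{lpp}(0)=0$ is smaller than every nonzero power product/term. For $(\mathbf u,f),(\mathbf v,g)\in\mathbf M$ with $f,g\neq0$, let $t=\mathrm{lcm}(\mathrm{lpp}(f),\mathrm{lpp}(g))$, $t_f=t/\mathrm{lpp}(f)$, $t_g=t/\mathrm{lpp}(g)$; if $\mathrm{lpp}(t_f\mathbf u)\succeq\mathrm{lpp}(t_g\mathbf v)$, then $[t_f(\mathbf u,f),t_g(\mathbf v,g)]$ is a critical pair (of $G$ if both elements lie in $G$) with S-polynomial $t_f(\mathbf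 u,f)-c\,t_g(\mathbf v,g)$, $c=\mathrm{lc}(f)/\mathrm{lc}(g)$. An element $(\mathbf u,f)\in\mathbf M$ has a standard representation w.r.t. $B\subset\mathbf M$ if $(\mathbf u,f)=\sum_{i=1}^s p_i(\mathbf v_i,g_i)$ with $(\mathbf v_i,g_i)\in B$, $p_i\in R$, $\mathrm{lpp}(\mathbf u)\succeq\mathrm{lpp}(p_i\mathbf v_i)$ and $\mathrm{lpp}(f)\succeq\mathrm{lpp}(p_ig_i)$ for all $i$. *)

(* Defs.v *)
From HB Require Import structures.
From mathcomp Require Import all_boot all_order all_algebra.
Set Implicit Arguments. Unset Strict Implicit. Unset Printing Implicit Defensive.
Import GRing.Theory.
Local Open Scope ring_scope.

Fixpoint mp (K : fieldType) (n : nat) : comNzRingType :=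
  if n is n'.+1 then ({poly mp K n'} : comNzRingType) else (K : comNzRingType).

Definition mon (n : nat) := n.-tuple nat.

Definition mzero (n : nat) : mon n := [tuple of nseq n 0%N].
Definition madd n (a b : mon n) : mon n := [tuple (tnth a i + tnth b i)%N | i < n].
Definition msub n (a b : mon n) : mon n := [tuple (tnth a i - tnth b i)%N | i < n].
Definition mlcm n (a b : mon n) : mon n := [tuple maxn (tnth a i) (tnth b i) | i < n].

Section Poly.
Variable K : fieldType.

(* coefficient of x^alpha in p; the last variable is the outermost one *)
Fixpoint mcoef (n : nat) : mp K n -> mon n -> K :=
  match n return mp K n -> mon n -> K with
  | 0 => fun p _ => p
  | n'.+1 => fun (p : {poly mp K n'}) (t : mon n'.+1) =>
      mcoef (p`_(thead t)) [tuple of behead t]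
  end.

Fixpoint mmono (n : nat) : mon n -> mp K n :=
  match n return mon n -> mp K n with
  | 0 => fun _ => (1 : K)
  | n'.+1 => fun t => ((mmono [tuple of behead t])%:P * 'X^(thead t) : {poly mp K n'})
  end.

Fixpoint mconst (n : nat) : K -> mp K n :=
  match n return K -> mp K n with
  | 0 => fun c => c
  | n'.+1 => fun c => ((mconst n' c)%:P : {poly mp K n'})
  end.

Fixpoint msupp (n : nat) : mp K n -> seq (mon n) :=
  match n return mp K n -> seq (mon n) with
  | 0 => fun p => if p != 0 then [:: [tuple]] else [::]
  | n'.+1 => fun (p : {poly mp K n'}) =>
      flatten [seq [seq [tuple of i :: tval t] | t <- msupp (p`_i)]
              | i <- iota 0 (size p)]
  end.
End Poly.

(* extension of an order to option values: None plays the role of lpp(0) = 0,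
   smaller than every power product / term *)
Definition ole (T : Type) (le : rel T) (x y : option T) : bool :=
  match x, y with
  | None, _ => true
  | Some _, None => false
  | Some a, Some b => le a b
  end.

Definition omax (T : Type) (le : rel T) (x y : option T) : option T :=
  match x, y with
  | None, _ => y
  | _, None => x
  | Some a, Some b => if le a b then Some b else Some a
  end.

Definition seqmax (T : Type) (le : rel T) (s : seq T) : option T :=
  foldr (fun t acc => omax le (Some t) acc) None s.

Definition term_order (n : nat) (le : rel (mon n)) : Prop :=
  [/\ reflexive le, antisymmetric le, transitive le & total le] /\
  [/\ (forall a, le (mzero n) a) &
      (forall a b c, le a b -> le (madd a c) (madd b c))].

(* term order on the terms x^alpha e_i of R^m *)
Definition modterm_order (n m : nat) (le : rel (mon n * 'I_m)) : Prop :=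
  [/\ reflexive le, antisymmetric le, transitive le & total le] /\
  [/\ (forall a i c, le (a, i) (madd a c, i)) &
      (forall a i b j c, le (a, i) (b, j) -> le (madd a c, i) (madd b c, j))].

Section Module.
Variables (K : fieldType) (n m : nat).
Local Notation R := (mp K n).
Definition vec := {ffun 'I_m -> R}.

Definition lpp (le : rel (mon n)) (p : R) : option (mon n) := seqmax le (msupp p).

Definition lc (le : rel (mon n)) (p : R) : K :=
  if lpp le p is Some t then mcoef p t else 0.

Definition lppv (lev : rel (mon n * 'I_m)) (u : vec) : option (mon n * 'I_m) :=
  seqmax lev [seq (t, i) | i <- enum 'I_m, t <- msupp (u i)].

Definition unitv (i : 'I_m) : vec := [ffun j => (i == j)%:R].
Definition dotv (u : vec) (fs : 'I_m -> R) : R := \sum_(i < m) u i * fs i.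
Definition scalev (p : R) (u : vec) : vec := [ffun i => p * u i].

Definition inM (fs : 'I_m -> R) (x : vec * R) : Prop := dotv x.1 fs = x.2.

Definition mulpair (p : R) (x : vec * R) : vec * R := (scalev p x.1, p * x.2).

Definition std_rep (le : rel (mon n)) (lev : rel (mon n * 'I_m))
    (B : seq (vec * R)) (x : vec * R) : Prop :=
  exists s : seq (R * (vec * R)),
    [/\ (forall q, q \in s -> q.2 \in B),
        x.1 = \sum_(q <- s) scalev q.1 q.2.1,
        x.2 = \sum_(q <- s) q.1 * q.2.2 &
        (forall q, q \in s ->
           ole lev (lppv lev (scalev q.1 q.2.1)) (lppv lev x.1)
           /\ ole le (lpp le (q.1 * q.2.2)) (lpp le x.2))].

(* data of a critical pair built from (v,g) and (w,h):
   t = lcm(lpp g, lpp h), t_g = t / lpp g, t_h = t / lpp h *)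
Definition tfac (le : rel (mon n)) (g h : R) : mon n :=
  match lpp le g, lpp le h with
  | Some a, Some b => msub (mlcm a b) a
  | _, _ => mzero n
  end.

Definition is_crit_pair (le : rel (mon n)) (lev : rel (mon n * 'I_m))
    (x y : vec * R) : bool :=
  [&& x.2 != 0, y.2 != 0 &
      ole lev (lppv lev (scalev (mmono K (tfac le y.2 x.2)) y.1))
              (lppv lev (scalev (mmono K (tfac le x.2 y.2)) x.1))].

Definition spair (le : rel (mon n)) (x y : vec * R) : vec * R :=
  let c := lc le x.2 / lc le y.2 in
  let a := mulpair (mmono K (tfac le x.2 y.2)) x in
  let b := mulpair (@mconst K n c * mmono K (tfac le y.2 x.2)) y in
  (a.1 - b.1, a.2 - b.2).
End Module.

(* Main.v *)
Require Import Defs.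
From HB Require Import structures.
From mathcomp Require Import all_boot all_order all_algebra.
From Stdlib Require Import Classical ClassicalEpsilon Lia.
Import GRing.Theory.
Local Open Scope ring_scope.

Section Mon.
Set Implicit Arguments. Unset Strict Implicit.
Variable n : nat.
Lemma tnth_madd (a b : mon n) i : tnth (madd a b) i = (tnth a i + tnth b i)%N.
Proof. by rewrite tnth_mktuple. Qed.
Lemma tnth_msub (a b : mon n) i : tnth (msub a b) i = (tnth a i - tnth b i)%N.
Proof. by rewrite tnth_mktuple. Qed.
Lemma tnth_mlcm (a b : mon n) i : tnth (mlcm a b) i = maxn (tnth a i) (tnth b i).
Proof. by rewrite tnth_mktuple. Qed.
Lemma tnth_mzero i : tnth (mzero n) i = 0%N.
Proof. by rewrite /mzero tnth_nseq. Qed.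
Lemma maddC (a b : mon n) : madd a b = madd b a.
Proof. by apply: eq_from_tnth=> i; rewrite !tnth_madd addnC. Qed.
Lemma maddA (a b c : mon n) : madd a (madd b c) = madd (madd a b) c.
Proof. by apply: eq_from_tnth=> i; rewrite !tnth_madd addnA. Qed.
Lemma madd0 (a : mon n) : madd a (mzero n) = a.
Proof. by apply: eq_from_tnth=> i; rewrite !tnth_madd tnth_mzero addn0. Qed.
Lemma maddI (a b c : mon n) : madd b a = madd c a -> b = c.
Proof. move=> h; apply: eq_from_tnth=> i.
have := congr1 (fun t => tnth t i) h; rewrite !tnth_madd; exact: addIn. Qed.
End Mon.
Definition mdiv {n} (a t : mon n) : bool := [forall i, (tnth a i <= tnth t i)%N].

Section Tup.
Set Implicit Arguments. Unset Strict Implicit.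
Variable n : nat.
Implicit Types a b t : mon n.+1.
Lemma tnth_bh a (j : 'I_n) : tnth [tuple of behead a] j = tnth a (lift ord0 j).
Proof.
rewrite tnth_behead; congr tnth; apply/val_inj.
by rewrite /= inordK // ltnS ltn_ord.
Qed.
Lemma thead_madd a b : thead (madd a b) = (thead a + thead b)%N.
Proof. by rewrite /thead tnth_madd. Qed.
Lemma thead_msub a b : thead (msub a b) = (thead a - thead b)%N.
Proof. by rewrite /thead tnth_msub. Qed.
Lemma thead_mzero : thead (mzero n.+1) = 0%N.
Proof. by rewrite /thead tnth_mzero. Qed.
Lemma behead_madd a b : [tuple of behead (madd a b)] = madd [tuple of behead a] [tuple of behead b].
Proof. by apply: eq_from_tnth=> i; rewrite tnth_madd !tnth_bh tnth_madd. Qed.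
Lemma behead_msub a b : [tuple of behead (msub a b)] = msub [tuple of behead a] [tuple of behead b].
Proof. by apply: eq_from_tnth=> i; rewrite tnth_msub !tnth_bh tnth_msub. Qed.
Lemma behead_mzero : [tuple of behead (mzero n.+1)] = mzero n.
Proof. by apply: eq_from_tnth=> i; rewrite tnth_bh !tnth_mzero. Qed.
Lemma mdivS a t : mdiv a t = (thead a <= thead t)%N && mdiv [tuple of behead a] [tuple of behead t].
Proof.
apply/forallP/andP => [h|[h1 /forallP h2] i].
  split; first exact: h.
  by apply/forallP=> i; rewrite !tnth_bh.
case: (unliftP ord0 i) => [j ->|->] //.
by have := h2 j; rewrite !tnth_bh.
Qed.
Lemma tuple_eqS a b : thead a = thead b -> [tuple of behead a] = [tuple of behead b] -> a = b.
Proof.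
move=> h1 h2; apply: eq_from_tnth=> i.
case: (unliftP ord0 i) => [j ->|->] //.
by have := congr1 (fun x : mon n => tnth x j) h2; rewrite !tnth_bh.
Qed.
End Tup.
Section Coef.
Set Implicit Arguments. Unset Strict Implicit.
Variable K : fieldType.

Lemma mcoefD n (p q : mp K n) t : mcoef (p + q) t = mcoef p t + mcoef q t.
Proof.
elim: n p q t => [//|n IH] p q t /=.
by rewrite coefD IH.
Qed.

Lemma mcoef0 n t : mcoef (0 : mp K n) t = 0.
Proof. by elim: n t => [//|n IH] t /=; rewrite coef0 IH. Qed.

Lemma mcoefN n (p : mp K n) t : mcoef (- p) t = - mcoef p t.
Proof. by elim: n p t => [//|n IH] p t /=; rewrite coefN IH. Qed.

Lemma mcoefB n (p q : mp K n) t : mcoef (p - q) t = mcoef p t - mcoef q t.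
Proof. by rewrite mcoefD mcoefN. Qed.

Lemma mcoef_sum n I (r : seq I) (F : I -> mp K n) t :
  mcoef (\sum_(i <- r) F i) t = \sum_(i <- r) mcoef (F i) t.
Proof. elim: r => [|i r IH]; first by rewrite !big_nil mcoef0.
by rewrite !big_cons mcoefD IH. Qed.

Lemma mcoefC n (c : K) (p : mp K n) t : mcoef (mconst n c * p) t = c * mcoef p t.
Proof. by elim: n p t => [//|n IH] p t /=; rewrite coefCM IH. Qed.

Lemma mconstM n (c d : K) : mconst n (c * d) = mconst n c * mconst n d.
Proof. by elim: n => [//|n IH] /=; rewrite IH polyCM. Qed.


Lemma mcoefM n (a : mon n) (p : mp K n) t :
  mcoef (mmono K a * p) t = if mdiv a t then mcoef p (msub t a) else 0.
Proof.
elim: n a p t => [|n IH] a p t /=.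
  have -> : mdiv a t by apply/forallP => -[].
  by rewrite mul1r.
rewrite -mulrA coefCM coefXnM IH mdivS thead_msub behead_msub.
case: ltnP => h; last by case: mdiv.
by rewrite mcoef0; case: mdiv.
Qed.

Lemma mcoef1 n t : mcoef (1 : mp K n) t = (t == mzero n)%:R.
Proof.
elim: n t => [|n IH] t /=.
  by rewrite (tuple0 t) (tuple0 (mzero 0)) eqxx.
rewrite coef1; have -> : (t == mzero n.+1) = (thead t == 0%N) && ([tuple of behead t] == mzero n).
  apply/eqP/andP => [->|[/eqP h1 /eqP h2]]; first by rewrite thead_mzero behead_mzero.
  by apply: tuple_eqS; rewrite ?thead_mzero ?behead_mzero.
by case: eqP => _ /=; rewrite ?IH ?mcoef0.
Qed.

Lemma msubK0 n (t a : mon n) : (mdiv a t && (msub t a == mzero n)) = (t == a).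
Proof.
apply/andP/eqP => [[/forallP h1 /eqP h2]|->].
  apply: eq_from_tnth => i; have := congr1 (fun x => tnth x i) h2.
  rewrite tnth_msub tnth_mzero => /eqP; rewrite subn_eq0 => h; apply/eqP.
  by rewrite eqn_leq h h1.
split; first by apply/forallP => i.
by apply/eqP/eq_from_tnth => i; rewrite tnth_msub tnth_mzero subnn.
Qed.

Lemma mcoefCX n (c : K) (a : mon n) t :
  mcoef (mconst n c * mmono K a) t = if t == a then c else 0.
Proof.
rewrite mcoefC -(mulr1 (mmono K a)) mcoefM -msubK0.
by case: mdiv => /=; rewrite ?mcoef1 ?mulr0 //; case: (_ == _); rewrite ?mulr1 ?mulr0.
Qed.

Lemma mconst1 n : mconst n (1 : K) = 1.
Proof. by elim: n => //= n ->. Qed.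

Lemma mcoefX n (a : mon n) t : mcoef (mmono K a) t = (t == a)%:R.
Proof.
have := @mcoefCX n 1 a t; rewrite mconst1 mul1r => ->.
by case: (t == a).
Qed.

Lemma cons_thead n (i : nat) (t : mon n) : thead [tuple of i :: tval t] = i.
Proof. by []. Qed.
Lemma cons_behead n (i : nat) (t : mon n) : [tuple of behead [tuple of i :: tval t]] = t.
Proof. by apply: val_inj. Qed.
Lemma cons_eta n (t : mon n.+1) : t = [tuple of thead t :: tval [tuple of behead t]].
Proof. by apply: val_inj => /=; case: t => -[|x s] //= hs; rewrite /thead (tnth_nth 0). Qed.

Lemma msuppP n (p : mp K n) t : (t \in msupp p) = (mcoef p t != 0).
Proof.
elim: n p t => [|n IH] p t /=.
  by rewrite (tuple0 t); case: (p != 0); rewrite ?inE ?in_nil //= (tuple0 [tuple]).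
apply/flatten_mapP/idP => [[i _ /mapP [t' ht' ->]]|h].
  by rewrite cons_thead cons_behead -IH.
exists (thead t).
  rewrite mem_iota add0n; case: ltnP => // hs.
  by move: h; rewrite nth_default // mcoef0 eqxx.
apply/mapP; exists [tuple of behead t]; first by rewrite IH.
exact: cons_eta.
Qed.

Lemma mcoef_eq0 n (p : mp K n) : (forall t, mcoef p t = 0) -> p = 0.
Proof.
elim: n p => [|n IH] p h /=.
  exact: (h [tuple]).
apply/polyP => i; rewrite coef0; apply: IH => t'.
by have := h [tuple of i :: tval t']; rewrite /= cons_behead.
Qed.

Lemma mdecomp n (p : mp K n) :
  p = \sum_(t <- undup (msupp p)) mconst n (mcoef p t) * mmono K t.
Proof.
apply/eqP; rewrite -subr_eq0; apply/eqP; apply: mcoef_eq0 => s.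
rewrite mcoefB mcoef_sum; apply/eqP; rewrite subr_eq0; apply/eqP.
under eq_bigr do rewrite mcoefCX.
case: (boolP (s \in undup (msupp p))) => hs.
  rewrite (bigD1_seq s) ?undup_uniq //= eqxx big1 ?addr0 //.
  by move=> t /negbTE; rewrite eq_sym => ->.
rewrite big1_seq; last by move=> t /andP[_ ht]; case: eqP ht hs => // -> ->.
by apply/eqP; move: hs; rewrite mem_undup msuppP negbK.
Qed.

Lemma mcoef_mul n (p q : mp K n) x :
  mcoef (p * q) x =
  \sum_(t <- undup (msupp p)) mcoef p t * (if mdiv t x then mcoef q (msub x t) else 0).
Proof.
rewrite {1}(mdecomp p) mulr_suml mcoef_sum; apply: eq_bigr => t _.
by rewrite -mulrA mcoefC mcoefM.
Qed.

Lemma mmonoD n (a b : mon n) : mmono K (madd a b) = mmono K a * mmono K b.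
Proof.
elim: n a b => [|n IH] a b /=; first by rewrite mulr1.
rewrite behead_madd thead_madd IH polyCM exprD.
by rewrite -!mulrA; congr (_ * _); rewrite mulrCA.
Qed.

Lemma mdivK n (t x : mon n) : mdiv t x -> madd (msub x t) t = x.
Proof.
move/forallP => h; apply: eq_from_tnth => i.
by rewrite tnth_madd tnth_msub subnK.
Qed.

Lemma mdiv_madd n (s t : mon n) : mdiv t (madd s t).
Proof. by apply/forallP => i; rewrite tnth_madd leq_addl. Qed.

Lemma msub_madd n (s t : mon n) : msub (madd s t) t = s.
Proof. by apply: eq_from_tnth => i; rewrite tnth_msub tnth_madd addnK. Qed.

Lemma mcoef_mul_supp n (p q : mp K n) x : mcoef (p * q) x != 0 ->
  exists t s, [/\ mcoef p t != 0, mcoef q s != 0 & x = madd s t].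
Proof.
rewrite mcoef_mul => h.
case: (boolP (has (fun t => mcoef p t * (if mdiv t x then mcoef q (msub x t) else 0) != 0)
          (undup (msupp p)))) => [/hasP [t _]|/hasPn hn]; last first.
  by move: h; rewrite big1_seq ?eqxx // => t /andP[_ /hn]; rewrite negbK => /eqP.
case: (boolP (mdiv t x)) => hd; last by rewrite mulr0 eqxx.
rewrite mulf_eq0 negb_or => /andP [h1 h2].
by exists t, (msub x t); split => //; rewrite mdivK.
Qed.

Lemma mcoef_mul_single n (p q : mp K n) a b :
  mcoef p a != 0 -> mcoef q b != 0 ->
  (forall t s, mcoef p t != 0 -> mcoef q s != 0 -> madd s t = madd b a -> t = a) ->
  mcoef (p * q) (madd b a) = mcoef p a * mcoef q b.
Proof.
move=> ha hb huniq; rewrite mcoef_mul.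
rewrite (bigD1_seq a) ?undup_uniq ?mem_undup ?msuppP //= mdiv_madd msub_madd.
rewrite big1 ?addr0 // => t /negP hta.
case: (boolP (mdiv t (madd b a))) => hd; last by rewrite mulr0.
case: (eqVneq (mcoef p t) 0) => [->|hpt]; first by rewrite mul0r.
case: (eqVneq (mcoef q (msub (madd b a) t)) 0) => [->|hqs]; first by rewrite mulr0.
by exfalso; apply: hta; apply/eqP; apply: huniq hpt hqs _; rewrite mdivK.
Qed.
End Coef.


Definition tot_order (T : eqType) (le : rel T) :=
  [/\ reflexive le, antisymmetric le, transitive le & total le].
Arguments tot_order {T} le.

Section Ord.
Set Implicit Arguments. Unset Strict Implicit.
Local Set Default Proof Using "All".
Variables (T : eqType) (le : rel T).
Hypothesis hT : tot_order le.
Let le_refl : reflexive le. Proof. by case: hT. Qed.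
Let le_anti : antisymmetric le. Proof. by case: hT. Qed.
Let le_trans : transitive le. Proof. by case: hT. Qed.
Let le_total : total le. Proof. by case: hT. Qed.

Local Notation ole := (ole le).
Local Notation omax := (omax le).
Local Notation seqmax := (seqmax le).

Lemma ole_refl x : ole x x.
Proof. by case: x => //= a; apply: le_refl. Qed.

Lemma ole_trans y x z : ole x y -> ole y z -> ole x z.
Proof. by case: x; case: y; case: z => //= a b c h1 h2; apply: le_trans h2. Qed.

Lemma ole_total x y : ole x y || ole y x.
Proof. by case: x; case: y => //= a b; apply: le_total. Qed.

Lemma ole_anti x y : ole x y -> ole y x -> x = y.
Proof. by case: x; case: y => //= a b h1 h2; rewrite (@le_anti a b) // h1 h2. Qed.

Lemma ole_None x : ole None x.
Proof. by []. Qed.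

Lemma ole_omaxl x y : ole x (omax x y).
Proof.
case: x => [a|]; case: y => [b|] //=; rewrite ?le_refl //.
by case: ifP => // _; apply: le_refl.
Qed.

Lemma ole_omaxr x y : ole y (omax x y).
Proof.
case: x => [a|]; case: y => [b|] //=; rewrite ?le_refl //.
case: ifP => //= h.
by have := le_total a b; rewrite h.
Qed.

Lemma omax_le x y z : ole x z -> ole y z -> ole (omax x y) z.
Proof. by case: x; case: y => //= a b; case: ifP. Qed.

Lemma omax_in x y : omax x y = x \/ omax x y = y.
Proof. by case: x; case: y => /=; try (by left); try (by right); move=> a b; case: ifP; [right|left]. Qed.

Lemma seqmax_cons y s : seqmax (y :: s) = omax (Some y) (seqmax s).
Proof. by []. Qed.

Lemma seqmax_le s z : (forall x, x \in s -> ole (Some x) z) -> ole (seqmax s) z.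
Proof.
elim: s => [//|y s IH] h; rewrite seqmax_cons.
apply: omax_le; first by apply: h; rewrite inE eqxx.
by apply: IH => x hx; apply: h; rewrite inE hx orbT.
Qed.

Lemma seqmax_ge s x : x \in s -> ole (Some x) (seqmax s).
Proof.
elim: s => [//|y s IH]; rewrite seqmax_cons inE => /orP [/eqP ->|h].
  exact: ole_omaxl.
exact: ole_trans (IH h) (ole_omaxr _ _).
Qed.

Lemma seqmax_in s a : seqmax s = Some a -> a \in s.
Proof.
elim: s => [//|y s IH]; rewrite seqmax_cons.
case: (omax_in (Some y) (seqmax s)) => ->; first by case=> ->; rewrite inE eqxx.
by move/IH => h; rewrite inE h orbT.
Qed.

Lemma seqmax_None s : seqmax s = None -> s = [::].
Proof. case: s => //= y s; case: (seqmax s) => //= b; by case: ifP. Qed.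

Lemma seqmax_nil : seqmax [::] = None.
Proof. by []. Qed.

Definition olt x y := ~~ ole y x.

Lemma olt_ole x y : olt x y -> ole x y.
Proof. by rewrite /olt => h; have := ole_total x y; rewrite (negbTE h) orbF. Qed.

Lemma ole_olt_trans y x z : ole x y -> olt y z -> olt x z.
Proof. move=> h1 h2; apply/negP => h3; move/negP: h2; apply; exact: ole_trans h3 h1. Qed.

Lemma olt_ole_trans y x z : olt x y -> ole y z -> olt x z.
Proof. move=> h1 h2; apply/negP => h3; move/negP: h1; apply; exact: ole_trans h2 h3. Qed.

Lemma ole_neq_olt x y : ole x y -> x <> y -> olt x y.
Proof. move=> h1 h2; apply/negP => h3; apply: h2; exact: ole_anti. Qed.

Lemma seqmax_lt s a : (forall x, x \in s -> le x a) -> a \notin s -> olt (seqmax s) (Some a).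
Proof.
move=> h1 h2; apply: ole_neq_olt; first by apply: seqmax_le.
by move=> h; move: h2; rewrite (seqmax_in h).
Qed.

End Ord.


Lemma nat_min_exists (P : nat -> Prop) : (exists v, P v) -> exists v, P v /\ forall w, P w -> (v <= w)%N.
Proof.
case=> v; elim/ltn_ind: v => v IH Pv.
case: (classic (exists w, P w /\ (w < v)%N)) => [[w [Pw lt]]|h].
  exact: IH lt Pw.
exists v; split=> // w Pw; rewrite leqNgt; apply/negP => lt; apply: h; by exists w.
Qed.

Lemma nondecr_sub (g : nat -> nat) :
  exists phi : nat -> nat, (forall i, (phi i < phi i.+1)%N) /\ (forall i, (g (phi i) <= g (phi i.+1))%N).
Proof.
have ex : forall k, exists i, (k <= i)%N /\ forall j, (k <= j)%N -> (g i <= g j)%N.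
  move=> k.
  have [v [[j [hj <-]] hv]] := @nat_min_exists (fun v => exists j, (k <= j)%N /\ g j = v)
      (ex_intro _ (g k) (ex_intro _ k (conj (leqnn k) erefl))).
  exists j; split=> // j' hj'; apply: hv; by exists j'.
pose next k := proj1_sig (constructive_indefinite_description _ (ex k)).
have nextP k : (k <= next k)%N /\ forall j, (k <= j)%N -> (g (next k) <= g j)%N.
  exact: (proj2_sig (constructive_indefinite_description _ (ex k))).
pose phi := fix phi i := if i is i'.+1 then next (phi i').+1 else next 0.
have h1 i : (phi i < phi i.+1)%N by rewrite /= (proj1 (nextP _)).
have h2 i j : (phi i <= j)%N -> (g (phi i) <= g j)%N.
  case: i => [|i] hj; first by apply: (proj2 (nextP 0)).
  apply: (proj2 (nextP _)); exact: leq_trans (h1 i) hj.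
exists phi; split=> // i; apply: h2; exact: ltnW (h1 i).
Qed.

Lemma dickson_fun (F : nat -> nat -> nat) k :
  exists phi : nat -> nat, (forall i, (phi i < phi i.+1)%N) /\
    (forall c i, (c < k)%N -> (F (phi i) c <= F (phi i.+1) c)%N).
Proof.
elim: k => [|k [phi [hphi hF]]].
  by exists id; split.
have [psi [hpsi hg]] := nondecr_sub (fun i => F (phi i) k).
have mphi : {homo phi : i j / (i < j)%N >-> (i < j)%N}.
  by apply: (homo_ltn (r := fun a b => (a < b)%N)) => // y x z; apply: ltn_trans.
exists (fun i => phi (psi i)); split.
  by move=> i; apply: mphi.
move=> c i; rewrite ltnS leq_eqVlt => /orP [/eqP ->|hc]; first exact: hg.
have := @homo_leq _ (fun j => F (phi j) c) leq (@leqnn) (fun y x z => @leq_trans y x z) (fun j => hF c j hc).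
by apply; apply: ltnW; apply: hpsi.
Qed.

Section WF.
Variable n : nat.
Variable le : rel (mon n).
Hypothesis hle : term_order le.

Lemma tnth_madd' (a b : mon n) i : tnth (madd a b) i = (tnth a i + tnth b i)%N.
Proof. by rewrite tnth_mktuple. Qed.

Lemma le_wf : well_founded (fun a b => ~~ le b a).
Proof.
case: hle => [[lrefl lanti ltrans ltot] [l0 lcomp]].
move=> a; apply: NNPP => na.
have stepE : forall x : {x | ~ Acc (fun a b => ~~ le b a) x},
    exists y : {y | ~ Acc (fun a b => ~~ le b a) y}, ~~ le (proj1_sig x) (proj1_sig y).
  move=> [x hx] /=; apply: NNPP => h; apply: hx; constructor => y hy.
  apply: NNPP => hy'; apply: h; by exists (exist _ y hy').
pose step x := proj1_sig (constructive_indefinite_description _ (stepE x)).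
have stepP x : ~~ le (proj1_sig x) (proj1_sig (step x)).
  exact: (proj2_sig (constructive_indefinite_description _ (stepE x))).
pose s := fix s i := if i is i'.+1 then step (s i') else exist _ a na.
pose f i := proj1_sig (s i).
have fS i : ~~ le (f i) (f i.+1) by apply: stepP.
have fle i : le (f i.+1) (f i) by have := ltot (f i) (f i.+1); rewrite (negbTE (fS i)).
have fmono : {homo f : i j / (i <= j)%N >-> le j i}.
  apply: (@homo_leq _ f (fun x y => le y x)).
  - by move=> x /=; apply: lrefl.
  - by move=> y x z /= h1 h2; apply: ltrans h1.
  - exact: fle.
have [phi [hphi hF]] := dickson_fun (fun i c => nth 0%N (f i) c) n.
set x := f (phi 0); set y := f (phi 1).
have hxy : le x y.
  have -> : y = madd (msub y x) x.
    apply: eq_from_tnth => c; rewrite tnth_madd' tnth_mktuple subnK //.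
    by rewrite !(tnth_nth 0%N); apply: hF.
  have := lcomp _ _ x (l0 (msub y x)).
  suff -> : madd (mzero n) x = x by [].
  by apply: eq_from_tnth => c; rewrite tnth_madd' /mzero tnth_nseq.
have := fmono _ _ (hphi 0); rewrite -/y => h.
move/negP: (fS (phi 0)); apply.
exact: ltrans hxy h.
Qed.
End WF.


HB.instance Definition _ (n : nat) := Equality.copy (mon n) (n.-tuple nat).

Section Lpp.
Set Implicit Arguments. Unset Strict Implicit.
Variables (K : fieldType) (n : nat) (le : rel (mon n)).
Hypothesis hle : term_order le.
Local Notation R := (mp K n).

Lemma lrefl : reflexive le. Proof. by case: hle => -[]. Qed.
Lemma lanti : antisymmetric le. Proof. by case: hle => -[]. Qed.
Lemma ltrans : transitive le. Proof. by case: hle => -[]. Qed.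
Lemma ltot : total le. Proof. by case: hle => -[]. Qed.
Lemma lcompr a b c : le a b -> le (madd a c) (madd b c). Proof. by case: hle => _ [_]; apply. Qed.
Lemma lcompl a b c : le a b -> le (madd c a) (madd c b).
Proof. by rewrite ![madd c _]maddC; apply: lcompr. Qed.

Local Notation ole := (ole le).
Lemma hT : tot_order le.
Proof. by split; [apply: lrefl|apply: lanti|apply: ltrans|apply: ltot]. Qed.

Lemma msupp0 : msupp (0 : R) = [::].
Proof.
case E: (msupp (0 : R)) => [//|x s].
by have := mem_head x s; rewrite -E msuppP mcoef0 eqxx.
Qed.

Lemma lpp0 : lpp le (0 : R) = None.
Proof. by rewrite /lpp msupp0. Qed.

Lemma lpp_None (p : R) : lpp le p = None -> p = 0.
Proof.
move/(seqmax_None hT) => h; apply: mcoef_eq0 => t; apply/eqP.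
by rewrite -[_ == 0]negbK -msuppP h.
Qed.

Lemma lpp_coef (p : R) a : lpp le p = Some a -> mcoef p a != 0.
Proof. by move/(seqmax_in hT); rewrite msuppP. Qed.

Lemma lpp_ge (p : R) t : mcoef p t != 0 -> ole (Some t) (lpp le p).
Proof. by rewrite -msuppP => h; exact: (@seqmax_ge _ le hT (msupp p) t h). Qed.

Lemma lpp_max (p : R) a t : lpp le p = Some a -> mcoef p t != 0 -> le t a.
Proof. by move=> h /lpp_ge; rewrite h. Qed.

Lemma lpp_le (p : R) z : (forall t, mcoef p t != 0 -> ole (Some t) z) -> ole (lpp le p) z.
Proof.
move=> h; apply: (@seqmax_le _ le hT (msupp p) z) => x; rewrite msuppP; exact: h.
Qed.

Lemma lpp_eq (p : R) a : mcoef p a != 0 -> (forall t, mcoef p t != 0 -> le t a) -> lpp le p = Some a.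
Proof.
move=> ha hmax; case E: (lpp le p) => [b|]; last by move: ha; rewrite (lpp_None E) mcoef0 eqxx.
congr Some; apply: lanti; rewrite (lpp_max E ha) hmax //; exact: lpp_coef E.
Qed.

Lemma lc_Some (p : R) a : lpp le p = Some a -> lc le p = mcoef p a.
Proof. by rewrite /lc => ->. Qed.

Lemma lppM (p q : R) a b : lpp le p = Some a -> lpp le q = Some b ->
  lpp le (p * q) = Some (madd b a) /\ mcoef (p * q) (madd b a) = mcoef p a * mcoef q b.
Proof.
move=> hp hq.
have hc : mcoef (p * q) (madd b a) = mcoef p a * mcoef q b.
  apply: mcoef_mul_single; rewrite ?(lpp_coef hp) ?(lpp_coef hq) // => t s ht hs e.
  have h1 : le (madd s t) (madd b t) by apply: lcompr; exact: lpp_max hq hs.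
  have h2 : le (madd b t) (madd b a) by apply: lcompl; exact: lpp_max hp ht.
  have e2 : madd b t = madd b a by apply: lanti; rewrite h2 -e h1.
  by apply: (@maddI _ b); rewrite maddC e2 maddC.
split=> //; apply: lpp_eq; first by rewrite hc mulf_neq0 // ?(lpp_coef hp) ?(lpp_coef hq).
move=> x /mcoef_mul_supp [t [s [ht hs ->]]].
apply: ltrans (lcompr t (lpp_max hq hs)) _; exact: lcompl (lpp_max hp ht).
Qed.

Lemma lppD_le (p q : R) z : ole (lpp le p) z -> ole (lpp le q) z -> ole (lpp le (p + q)) z.
Proof.
move=> hp hq; apply: lpp_le => t; rewrite mcoefD => h.
case: (eqVneq (mcoef p t) 0) => [e|hpt]; last by have := ole_trans hT (lpp_ge hpt) hp.
  rewrite e add0r in h. exact: (@ole_trans _ le hT _ _ z (lpp_ge h) hq).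
Qed.

Lemma lppB_le (p q : R) z : ole (lpp le p) z -> ole (lpp le q) z -> ole (lpp le (p - q)) z.
Proof.
move=> hp hq; apply: lpp_le => t; rewrite mcoefB => h.
case: (eqVneq (mcoef p t) 0) => [e|hpt]; last exact: (@ole_trans _ le hT _ _ z (lpp_ge hpt) hp).
rewrite e sub0r oppr_eq0 in h; exact: (@ole_trans _ le hT _ _ z (lpp_ge h) hq).
Qed.

Lemma lpp_lt (p : R) a : mcoef p a = 0 -> (forall t, mcoef p t != 0 -> le t a) ->
  olt le (lpp le p) (Some a).
Proof.
move=> h0 h; apply: (@seqmax_lt _ le hT (msupp p) a).
  by move=> x; rewrite msuppP; apply: h.
by rewrite msuppP h0 eqxx.
Qed.

Lemma lpp_CX (c : K) a : c != 0 -> lpp le (mconst n c * mmono K a) = Some a.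
Proof.
move=> hc; apply: lpp_eq; first by rewrite mcoefCX eqxx.
move=> t; rewrite mcoefCX; case E: (t == a); last by rewrite eqxx.
by move/eqP: E => -> _; apply: lrefl.
Qed.

Lemma madd_lt a b c : olt le (Some a) (Some b) -> olt le (Some (madd a c)) (Some (madd b c)).
Proof.
move=> h; rewrite /olt /= in h *; apply/negP => h2.
have h1 : le a b by have := ltot a b; rewrite (negbTE h) orbF.
have e : madd a c = madd b c by apply: lanti; rewrite h2 lcompr.
by move: h; rewrite (maddI e) lrefl.
Qed.

Lemma oletr (y x z : option (mon n)) : ole x y -> ole y z -> ole x z.
Proof. exact: (@ole_trans _ le hT y x z). Qed.
Lemma olt_le (x y : option (mon n)) : olt le x y -> ole x y.
Proof. exact: (@olt_ole _ le hT x y). Qed.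
Lemma ole_lt_tr (y x z : option (mon n)) : ole x y -> olt le y z -> olt le x z.
Proof. exact: (@ole_olt_trans _ le hT y x z). Qed.
Lemma olt_le_tr (y x z : option (mon n)) : olt le x y -> ole y z -> olt le x z.
Proof. exact: (@olt_ole_trans _ le hT y x z). Qed.

End Lpp.


Section Vec.
Set Implicit Arguments. Unset Strict Implicit.
Variables (K : fieldType) (n m : nat) (lev : rel (mon n * 'I_m)).
Hypothesis hlev : modterm_order lev.
Local Notation R := (mp K n).
Local Notation V := (vec K n m).
Local Notation ole := (ole lev).
Local Notation lppv := (lppv lev).

Lemma vT : tot_order lev. Proof. by case: hlev => -[]. Qed.
Lemma vcomp a i b j c : lev (a, i) (b, j) -> lev (madd a c, i) (madd b c, j).
Proof. by case: hlev => _ [_]; apply. Qed.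
Lemma vinc a i c : lev (a, i) (madd a c, i).
Proof. by case: hlev => _ []. Qed.
Lemma vanti : antisymmetric lev. Proof. by case: hlev => -[]. Qed.
Lemma vtrans : transitive lev. Proof. by case: hlev => -[]. Qed.

Lemma voletr (y x z : option (mon n * 'I_m)) : ole x y -> ole y z -> ole x z.
Proof. exact: (@ole_trans _ lev vT y x z). Qed.

Definition oshift (s : mon n) (x : option (mon n * 'I_m)) :=
  if x is Some (b, i) then Some (madd b s, i) else None.

Lemma memv (u : V) t i : ((t, i) \in [seq (t, i) | i <- enum 'I_m, t <- msupp (u i)]) = (mcoef (u i) t != 0).
Proof.
apply/allpairsPdep/idP => [[j [t' [_ ht' [-> ->]]]]|h]; first by rewrite -msuppP.
by exists i, t; rewrite mem_enum msuppP.
Qed.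

Lemma lppv_ge (u : V) t i : mcoef (u i) t != 0 -> ole (Some (t, i)) (lppv u).
Proof. by rewrite -memv => h; exact: (@seqmax_ge _ lev vT _ _ h). Qed.

Lemma lppv_le (u : V) z : (forall t i, mcoef (u i) t != 0 -> ole (Some (t, i)) z) -> ole (lppv u) z.
Proof.
move=> h; apply: (@seqmax_le _ lev vT _ z) => -[t i]; rewrite memv; exact: h.
Qed.

Lemma lppv_Some (u : V) b i : lppv u = Some (b, i) -> mcoef (u i) b != 0.
Proof. by move/(@seqmax_in _ lev vT); rewrite memv. Qed.

Lemma lppv_max (u : V) b i t j : lppv u = Some (b, i) -> mcoef (u j) t != 0 -> lev (t, j) (b, i).
Proof. by move=> h /lppv_ge; rewrite h. Qed.

Lemma lppv_None (u : V) t j : lppv u = None -> mcoef (u j) t = 0.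
Proof. by move=> h; apply/eqP; rewrite -[_ == 0]negbK; apply/negP => /lppv_ge; rewrite h. Qed.

Lemma lppvD_le (u w : V) z : ole (lppv u) z -> ole (lppv w) z -> ole (lppv (u + w)) z.
Proof.
move=> hu hw; apply: lppv_le => t i; rewrite ffunE mcoefD => h.
case: (eqVneq (mcoef (u i) t) 0) => [e|hut]; last exact: voletr (lppv_ge hut) hu.
rewrite e add0r in h; exact: voletr (lppv_ge h) hw.
Qed.

Lemma lppvB_le (u w : V) z : ole (lppv u) z -> ole (lppv w) z -> ole (lppv (u - w)) z.
Proof.
move=> hu hw; apply: lppv_le => t i; rewrite ffunE ffunE mcoefB => h.
case: (eqVneq (mcoef (u i) t) 0) => [e|hut]; last exact: voletr (lppv_ge hut) hu.
rewrite e sub0r oppr_eq0 in h; exact: voletr (lppv_ge h) hw.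
Qed.

Lemma oshift_le s x y : ole x y -> ole (oshift s x) (oshift s y).
Proof. by case: x => [[a i]|]; case: y => [[b j]|] //= h; apply: vcomp. Qed.

Lemma oshiftD s r x : oshift s (oshift r x) = oshift (madd r s) x.
Proof. by case: x => [[a i]|] //=; rewrite maddA. Qed.

Lemma oshift_ge s x : ole x (oshift s x).
Proof. by case: x => [[a i]|] //=; apply: vinc. Qed.

Lemma scalevE (p : R) (u : V) i : scalev p u i = p * u i.
Proof. by rewrite ffunE. Qed.

Lemma lppv_shift (c : K) s (u : V) :
  ole (lppv (scalev (mconst n c * mmono K s) u)) (oshift s (lppv u)).
Proof.
apply: lppv_le => t i; rewrite scalevE -mulrA mcoefC mcoefM.
case: (boolP (mdiv s t)) => hd; last by rewrite mulr0 eqxx.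
rewrite mulf_eq0 negb_or => /andP [_ h].
case E: (lppv u) => [[b j]|]; last by move: h; rewrite (lppv_None _ _ E) eqxx.
by rewrite /= -(mdivK hd); apply: vcomp; apply: lppv_max E h.
Qed.

Lemma lppv_hard (p : R) (u : V) t b i : mcoef p t != 0 -> lppv u = Some (b, i) ->
  ole (Some (madd b t, i)) (lppv (scalev p u)).
Proof.
move=> ht hu.
set S := [seq (madd b t', i) | t' <- msupp p].
have hS : (madd b t, i) \in S by apply/mapP; exists t; rewrite ?msuppP.
case E: (seqmax lev S) => [[x j]|]; last by move: hS; rewrite (seqmax_None vT E).
have /mapP [a ha [ex ej]] := seqmax_in vT E.
have hmax : forall t', mcoef p t' != 0 -> lev (madd b t', i) (madd b a, i).
  move=> t' h'; have : (madd b t', i) \in S by apply/mapP; exists t'; rewrite ?msuppP.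
  by move/(seqmax_ge vT); rewrite E ex ej.
have ha' : mcoef p a != 0 by rewrite -msuppP.
apply: voletr (lppv_ge (i := i) (t := madd b a) _).
  by apply: hmax.
rewrite scalevE (mcoef_mul_single ha' (lppv_Some hu)).
  by rewrite mulf_neq0 // lppv_Some.
move=> t' s h1 h2 e.
have l1 : lev (madd s t', i) (madd b t', i) by apply: vcomp; apply: lppv_max hu h2.
have l2 := hmax _ h1.
have : (madd b t', i) = (madd b a, i) by apply: vanti; rewrite l2 -e l1.
move/(congr1 fst) => /= e2; by apply: (@maddI _ b); rewrite maddC e2 maddC.
Qed.

Lemma lppv_sub (P p : R) (u : V) : (forall t, mcoef P t != 0 -> mcoef p t != 0) ->
  ole (lppv (scalev P u)) (lppv (scalev p u)).
Proof.
move=> hsub; apply: lppv_le => x i; rewrite scalevE => /mcoef_mul_supp [t [s [ht hs ->]]].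
case E: (lppv u) => [[b j]|]; last by move: hs; rewrite (lppv_None _ _ E) eqxx.
apply: voletr (lppv_hard (hsub _ ht) E).
by apply: vcomp; apply: lppv_max E hs.
Qed.

End Vec.


Section Main.
Set Implicit Arguments. Unset Strict Implicit.
Variables (K : fieldType) (n m : nat) (le : rel (mon n)) (lev : rel (mon n * 'I_m)).
Hypotheses (hle : term_order le) (hlev : modterm_order lev).
Local Notation R := (mp K n).
Local Notation V := (vec K n m).
Local Notation term := (R * (V * R))%type.

Definition prodq (q : term) : R := q.1 * q.2.2.
Definition vtq (q : term) : V := scalev q.1 q.2.1.

Lemma lpp_sum_le (r : seq term) (F : term -> R) z :
  (forall q, q \in r -> ole le (lpp le (F q)) z) -> ole le (lpp le (\sum_(q <- r) F q)) z.
Proof.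
elim: r => [|q r IH] h; first by rewrite big_nil lpp0.
rewrite big_cons; apply: (lppD_le hle) => //; first by apply: h; rewrite inE eqxx.
by apply: IH => q' hq'; apply: h; rewrite inE hq' orbT.
Qed.

Lemma olt_neq (x y : option (mon n)) : olt le x y -> x != y.
Proof. by apply: contraL => /eqP ->; rewrite /olt negbK (ole_refl (hT hle)). Qed.

Lemma ole_prod (p g : R) a b : ole le (lpp le p) (Some a) -> lpp le g = Some b ->
  ole le (lpp le (p * g)) (Some (madd b a)).
Proof.
move=> hp hg; case E: (lpp le p) => [r|]; last by rewrite (lpp_None hle E) mul0r lpp0.
rewrite (proj1 (lppM hle E hg)) /=; rewrite E /= in hp.
by rewrite ![madd b _]maddC; apply: (lcompr hle).
Qed.

Lemma olt_prod (p g : R) a b : olt le (lpp le p) (Some a) -> lpp le g = Some b ->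
  olt le (lpp le (p * g)) (Some (madd b a)).
Proof.
move=> hp hg; case E: (lpp le p) => [r|]; last by rewrite (lpp_None hle E) mul0r lpp0.
rewrite (proj1 (lppM hle E hg)) ![madd b _]maddC; rewrite E in hp.
exact: (madd_lt hle).
Qed.


Lemma natfact (A B C D : nat) : (B + A = C + D ->
  [/\ (maxn B C - B) + (B + A - maxn B C) = A, (maxn C B - C) + (B + A - maxn B C) = D,
     B + (maxn B C - B) = maxn B C, C + (maxn C B - C) = maxn B C &
     maxn B C + (B + A - maxn B C) = B + A])%N.
Proof.
move=> h; rewrite /maxn; case: ltnP => h2; case: ltnP => h3;
  (move/ltP: h2 => h2 || move/leP: h2 => h2); (move/ltP: h3 => h3 || move/leP: h3 => h3);
  rewrite -!plusE -!minusE in h *; split; lia.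
Qed.

Lemma tupfacts (ai aj bi bj : mon n) : madd bi ai = madd bj aj ->
  let L := mlcm bi bj in let s := msub (madd bi ai) L in
  [/\ madd (msub L bi) s = ai, madd (msub (mlcm bj bi) bj) s = aj,
      madd bi (msub L bi) = L, madd bj (msub (mlcm bj bi) bj) = L &
      madd L s = madd bi ai].
Proof.
move=> e L s.
have h k := natfact (etrans (esym (tnth_madd bi ai k)) (etrans (congr1 (fun x => tnth x k) e) (tnth_madd bj aj k))).
split; apply: eq_from_tnth => k; have [h1 h2 h3 h4 h5] := h k;
  by rewrite !(tnth_madd, tnth_msub, tnth_mlcm) ?tnth_madd.
Qed.


Lemma ident (A B X Y : R) : A + B = (A - X) + (B + Y) + (X - Y).
Proof. by rewrite -!addrA; congr (_ + _); rewrite addrCA [Y + _]addrC subrK addNr addr0. Qed.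


Lemma step (G : seq (V * R)) (u : V) (tau : mon n) (pi pj : R) (xi xj : V * R) :
  xi \in G -> xj \in G ->
  lpp le (pi * xi.2) = Some tau -> lpp le (pj * xj.2) = Some tau ->
  ole lev (lppv lev (scalev pi xi.1)) (lppv lev u) ->
  ole lev (lppv lev (scalev pj xj.1)) (lppv lev u) ->
  (ole lev (lppv lev (scalev (mmono K (tfac le xi.2 xj.2)) xi.1)) (lppv lev u) ->
     std_rep le lev G (spair le xi xj)) ->
  exists s2 : seq term,
  [/\ (forall q, q \in s2 -> q.2 \in G),
      vtq (pi, xi) + vtq (pj, xj) = \sum_(q <- s2) vtq q,
      prodq (pi, xi) + prodq (pj, xj) = \sum_(q <- s2) prodq q,
      (forall q, q \in s2 -> ole lev (lppv lev (vtq q)) (lppv lev u) /\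
                             ole le (lpp le (prodq q)) (Some tau)) &
      (count (fun q => lpp le (prodq q) == Some tau) s2 <= 1)%N].
Proof.
case: xi => vi gi; case: xj => vj gj /= hxi hxj hi hj hvi hvj hsp.
have nz (p g : R) : lpp le (p * g) = Some tau -> exists a b, lpp le p = Some a /\ lpp le g = Some b.
  move=> h; case Ep: (lpp le p) => [a|]; last by move: h; rewrite (lpp_None hle Ep) mul0r lpp0.
  case Eg: (lpp le g) => [b|]; last by move: h; rewrite (lpp_None hle Eg) mulr0 lpp0.
  by exists a, b.
have [ai [bi [Epi Egi]]] := nz _ _ hi.
have [aj [bj [Epj Egj]]] := nz _ _ hj.
have [hti hci] := lppM hle Epi Egi; have [htj hcj] := lppM hle Epj Egj.
rewrite hi in hti; rewrite hj in htj; case: hti => eti; case: htj => etj.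
have [f1 f2 f3 f4 f5] := tupfacts (etrans (esym eti) etj).
set L := mlcm bi bj in f1 f2 f3 f4 f5.
set sg := msub (madd bi ai) L in f1 f2 f3 f4 f5.
set tgi := msub L bi in f1 f3. set tgj := msub (mlcm bj bi) bj in f2 f4.
have tfi : tfac le gi gj = tgi by rewrite /tfac Egi Egj.
have tfj : tfac le gj gi = tgj by rewrite /tfac Egi Egj.
set ci := mcoef pi ai.
have ci0 : ci != 0 by rewrite /ci; exact: (lpp_coef hle Epi).
set c := lc le gi / lc le gj.
have Esp : spair le (vi, gi) (vj, gj) =
    (scalev (mmono K tgi) vi - scalev (mconst n c * mmono K tgj) vj,
     mmono K tgi * gi - (mconst n c * mmono K tgj) * gj).
  by rewrite /spair /mulpair /= tfi tfj.
have cj0 : mcoef pj aj != 0 by exact: (lpp_coef hle Epj).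
have hA : ole lev (oshift ai (lppv lev vi)) (lppv lev u).
  case E: (lppv lev vi) => [[b i0]|] //; exact (voletr hlev (lppv_hard hlev ci0 E) hvi).
have hB : ole lev (oshift aj (lppv lev vj)) (lppv lev u).
  case E: (lppv lev vj) => [[b i0]|] //; exact (voletr hlev (lppv_hard hlev cj0 E) hvj).
have sc1 (t : mon n) (w : V) : scalev (mmono K t) w = scalev (mconst n 1 * mmono K t) w.
  by rewrite mconst1 mul1r.
have pre : ole lev (lppv lev (scalev (mmono K tgi) vi)) (lppv lev u).
  rewrite sc1; apply: (voletr hlev (lppv_shift hlev 1 tgi vi)).
  apply: (voletr hlev (oshift_ge hlev sg _)).
  by rewrite oshiftD f1.
move: hsp; rewrite tfi => /(_ pre) [sq [hsqG hsq1 hsq2 hsqb]].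
rewrite Esp /= in hsq1 hsq2 hsqb.
set sp1 := scalev (mmono K tgi) vi - scalev (mconst n c * mmono K tgj) vj in hsq1 hsqb.
set sp2 := mmono K tgi * gi - mconst n c * mmono K tgj * gj in hsq2 hsqb.
have hC : ole lev (oshift sg (lppv lev sp1)) (lppv lev u).
  set Y := omax lev (oshift tgi (lppv lev vi)) (oshift tgj (lppv lev vj)).
  have h1 : ole lev (lppv lev sp1) Y.
    apply: (lppvB_le hlev).
      rewrite sc1; apply: (voletr hlev (lppv_shift hlev 1 tgi vi)).
      exact: (ole_omaxl (vT hlev)).
    apply: (voletr hlev (lppv_shift hlev c tgj vj)).
    exact: (ole_omaxr (vT hlev)).
  apply: (voletr hlev (oshift_le hlev sg h1)).
  rewrite /Y; case: (omax_in (vT hlev) (oshift tgi (lppv lev vi)) (oshift tgj (lppv lev vj))) => ->.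
    by rewrite oshiftD f1.
  by rewrite oshiftD f2.
have lgi : lc le gi = mcoef gi bi by apply: lc_Some.
have lgj : lc le gj = mcoef gj bj by apply: lc_Some.
have gi0 : mcoef gi bi != 0 by exact: (lpp_coef hle Egi).
have gj0 : mcoef gj bj != 0 by exact: (lpp_coef hle Egj).
have c0 : c != 0 by rewrite /c lgi lgj mulf_neq0 ?invr_neq0.
have hD : olt le (lpp le sp2) (Some L).
  have [l1 k1] : lpp le (mmono K tgi * gi) = Some L /\ mcoef (mmono K tgi * gi) L = mcoef gi bi.
    have e1 : lpp le (mmono K tgi) = Some tgi.
      by rewrite -(mul1r (mmono K tgi)) -(mconst1 K n) (lpp_CX hle _ (oner_neq0 K)).
    have [h1 h2] := lppM hle e1 Egi; rewrite f3 in h1 h2.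
    by rewrite h1 h2 mcoefX eqxx mul1r.
  have [l2 k2] : lpp le (mconst n c * mmono K tgj * gj) = Some L /\
                 mcoef (mconst n c * mmono K tgj * gj) L = c * mcoef gj bj.
    have [h1 h2] := lppM hle (lpp_CX hle tgj c0) Egj; rewrite f4 in h1 h2.
    by rewrite h1 h2 mcoefCX eqxx.
  have hle2 : ole le (lpp le sp2) (Some L).
    by apply: (lppB_le hle); rewrite ?l1 ?l2 /= (lrefl hle).
  apply: (lpp_lt hle).
    by rewrite /sp2 mcoefB k1 k2 /c lgi lgj divfK // subrr.
  move=> t ht; have := oletr hle (lpp_ge hle ht) hle2; done.
set M := mconst n ci * mmono K sg.
set lti := mconst n ci * mmono K ai.
set ri := pi - lti.
set pj' := pj + mconst n (ci * c) * mmono K aj.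
have hM1 : M * mmono K tgi = lti by rewrite /M -mulrA -mmonoD maddC f1.
have hM2 : M * mconst n c * mmono K tgj = mconst n (ci * c) * mmono K aj.
  by rewrite -mulrA /M -f2 maddC mmonoD mconstM mulrACA.
have lM : lpp le M = Some sg by apply: lpp_CX.
have cri t : mcoef ri t = if t == ai then 0 else mcoef pi t.
  by rewrite /ri mcoefB mcoefCX; case: eqP => [->|_]; rewrite ?subrr ?subr0.
have cpj t : mcoef pj' t != 0 -> mcoef pj t != 0.
  rewrite /pj' mcoefD mcoefCX; case E: (t == aj); last by rewrite addr0.
  by move/eqP: E => -> _.
have sumsc (r : seq term) : \sum_(q <- r) vtq (M * q.1, q.2) = scalev M (\sum_(q <- r) vtq q).
  apply/ffunP => k; rewrite ffunE !sum_ffunE mulr_sumr; apply: eq_bigr => q _.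
  by rewrite /vtq !ffunE mulrA.
have eti' : Some tau = Some (madd bi ai) by rewrite eti.
have etj' : Some tau = Some (madd bj aj) by rewrite etj.
have bri : olt le (lpp le (ri * gi)) (Some tau).
  rewrite eti'; apply: olt_prod Egi; apply: (lpp_lt hle).
    by rewrite cri eqxx.
  by move=> t; rewrite cri; case: (t == ai) => [|h]; [rewrite eqxx|exact: (lpp_max hle Epi h)].
have bpj : ole le (lpp le (pj' * gj)) (Some tau).
  rewrite etj'; apply: ole_prod Egj; apply: (lpp_le hle) => t /cpj h.
  exact: (lpp_max hle Epj h).
have bmap q : q \in sq -> olt le (lpp le (prodq (M * q.1, q.2))) (Some tau).
  move=> hq; rewrite /prodq /= -mulrA mulrC eti -f5.
  have -> : madd L sg = madd sg L by rewrite maddC.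
  apply: olt_prod lM.
  exact: (ole_lt_tr hle (proj2 (hsqb q hq)) hD).
exists ((ri, (vi, gi)) :: (pj', (vj, gj)) :: [seq (M * q.1, q.2) | q <- sq]).
split.
- move=> q; rewrite !inE => /orP [/eqP -> //|/orP [/eqP -> //|/mapP [q' hq' ->]]].
  exact: (hsqG _ hq').
- rewrite !big_cons big_map sumsc -hsq1; apply/ffunP => k.
  rewrite /vtq /sp1 !ffunE /= mulrBr !mulrA hM1 hM2 /ri /pj' mulrBl mulrDl addrA.
  exact: ident.
- rewrite !big_cons big_map.
  have -> : \sum_(q <- sq) prodq (M * q.1, q.2) = M * \sum_(q <- sq) prodq q.
    by rewrite mulr_sumr; apply: eq_bigr => q _; rewrite /prodq /= mulrA.
  rewrite -hsq2 /prodq /sp2 /= mulrBr !mulrA hM1 hM2 /ri /pj' mulrBl mulrDl addrA.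
  exact: ident.
- move=> q; rewrite !inE => /orP [/eqP ->|/orP [/eqP ->|/mapP [q' hq' ->]]].
  + split; last exact: (olt_le hle bri).
    apply: (voletr hlev _ hvi); apply: (lppv_sub hlev) => t; rewrite cri.
    by case: (t == ai); rewrite ?eqxx.
  + split=> //; apply: (voletr hlev _ hvj); exact: (lppv_sub hlev _ cpj).
  + split; last exact: (olt_le hle (bmap _ hq')).
    have -> : vtq (M * q'.1, q'.2) = scalev (mconst n ci * mmono K sg) (vtq q').
      by apply/ffunP => k; rewrite /vtq /M !ffunE mulrA.
    apply: (voletr hlev (lppv_shift hlev ci sg _)).
    apply: (voletr hlev _ hC); apply: (oshift_le hlev); exact: (proj1 (hsqb q' hq')).
- rewrite /= (negbTE (olt_neq bri)) add0n count_map.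
  rewrite (eq_in_count (a2 := pred0)) ?count_pred0 ?addn0 ?leq_b1 //.
  by move=> q hq /=; apply: negbTE; apply: olt_neq; apply: bmap.
Qed.


Variables (fs : 'I_m -> R) (G : seq (V * R)) (u : V) (f : R).

Definition Inv (s : seq term) :=
  [/\ (forall q, q \in s -> q.2 \in G), u = \sum_(q <- s) vtq q, f = \sum_(q <- s) prodq q &
      (forall q, q \in s -> ole lev (lppv lev (vtq q)) (lppv lev u))].
Definition cnt tau (s : seq term) := count (fun q => lpp le (prodq q) == Some tau) s.
Definition bnd tau (s : seq term) := forall q, q \in s -> ole le (lpp le (prodq q)) (Some tau).

Lemma Inv_perm s s' : perm_eq s s' -> Inv s -> Inv s'.
Proof.
move=> hp [h1 h2 h3 h4]; split.
- by move=> q; rewrite -(perm_mem hp); apply: h1.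
- by rewrite -(perm_big _ hp).
- by rewrite -(perm_big _ hp).
- by move=> q; rewrite -(perm_mem hp); apply: h4.
Qed.

Lemma finish s : Inv s -> (forall q, q \in s -> ole le (lpp le (prodq q)) (lpp le f)) ->
  std_rep le lev G (u, f).
Proof. by move=> [h1 h2 h3 h4] h5; exists s; split => // q hq; split; [apply: h4|apply: h5]. Qed.

Lemma zero_case tau s :
  (forall t, ~~ le tau t -> forall s, Inv s -> bnd t s -> std_rep le lev G (u, f)) ->
  Inv s -> bnd tau s -> cnt tau s = 0%N -> std_rep le lev G (u, f).
Proof.
move=> IH hI hb hc.
have nt q : q \in s -> lpp le (prodq q) != Some tau.
  move=> hq; apply/negP => e; move: hc; rewrite /cnt => /eqP; rewrite -leqn0 leqNgt -has_count.
  by move/negP; apply; apply/hasP; exists q.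
set Lp := pmap (fun q => lpp le (prodq q)) s.
case E: (seqmax le Lp) => [t'|]; last first.
  apply: (finish hI) => q hq; move: (seqmax_None (hT hle) E).
  case E2: (lpp le (prodq q)) => [a|] // hnil.
  have : a \in Lp by rewrite mem_pmap; apply/mapP; exists q.
  by rewrite hnil.
have := seqmax_in (hT hle) E; rewrite mem_pmap => /mapP [q hq eq].
apply: (IH t').
  have := hb q hq; rewrite -eq /= => h1; apply/negP => h2.
  by move: (nt q hq); rewrite -eq (lanti hle (x := t') (y := tau)) ?h1 ?h2 ?eqxx.
- exact: hI.
move=> q' hq'; case E2: (lpp le (prodq q')) => [a|] //.
have : a \in Lp by rewrite mem_pmap; apply/mapP; exists q'.
by move/(seqmax_ge (hT hle)); rewrite E.
Qed.


Lemma two_tops tau s : Inv s -> bnd tau s -> (0 < cnt tau s)%N -> ~~ ole le (Some tau) (lpp le f) ->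
  exists q0 q1 rest, [/\ perm_eq s (q0 :: q1 :: rest), lpp le (prodq q0) = Some tau &
                         lpp le (prodq q1) = Some tau].
Proof.
move=> [_ _ hf _] hb; rewrite /cnt -has_count => /hasP [q0 hq0 /eqP e0] hnf.
have hp := perm_to_rem hq0.
set rest := rem q0 s in hp.
case: (boolP (has (fun q => lpp le (prodq q) == Some tau) rest)) => [/hasP [q1 hq1 /eqP e1]|hn].
  have hp1 := perm_to_rem hq1.
  exists q0, q1, (rem q1 rest); split => //.
  by apply: (perm_trans hp); rewrite perm_cons.
exfalso; move/negP: hnf; apply.
have hrest q : q \in rest -> mcoef (prodq q) tau = 0.
  move=> hq; apply/eqP; rewrite -[_ == 0]negbK; apply/negP => h.
  have h1 := lpp_ge hle h.
  have h2 : q \in s by rewrite (perm_mem hp) inE hq orbT.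
  move: hn => /hasPn /(_ q hq); rewrite (ole_anti (hT hle) (hb q h2) h1) eqxx //.
apply: (lpp_ge hle (p := f) (t := tau)).
rewrite hf (perm_big _ hp) big_cons mcoefD mcoef_sum big1_seq ?addr0.
  exact: (lpp_coef hle e0).
by move=> q /andP [_ hq]; apply: hrest.
Qed.

Lemma reduce tau s q0 q1 rest :
  (forall x y, x \in G -> y \in G -> is_crit_pair le lev x y ->
     ole lev (lppv lev (scalev (mmono K (tfac le x.2 y.2)) x.1)) (lppv lev u) ->
     std_rep le lev G (spair le x y)) ->
  Inv s -> bnd tau s -> perm_eq s (q0 :: q1 :: rest) ->
  lpp le (prodq q0) = Some tau -> lpp le (prodq q1) = Some tau ->
  is_crit_pair le lev q0.2 q1.2 ->
  exists s', [/\ Inv s', bnd tau s' & (cnt tau s' < cnt tau s)%N].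
Proof.
move=> hcrit hI hb hp e0 e1 hcp.
case: q0 hp e0 hcp => p0 x0 hp e0 hcp; case: q1 hp e1 hcp => p1 x1 hp e1 hcp.
rewrite /= in hcp.
have hI' := Inv_perm hp hI.
have [hG hu hf hv] := hI'.
have hq0 : (p0, x0) \in (p0, x0) :: (p1, x1) :: rest by rewrite inE eqxx.
have hq1 : (p1, x1) \in (p0, x0) :: (p1, x1) :: rest by rewrite !inE eqxx orbT.
have [s2 [h2G h2u h2f h2b h2c]] := step (hG _ hq0) (hG _ hq1) e0 e1 (hv _ hq0) (hv _ hq1)
    (hcrit _ _ (hG _ hq0) (hG _ hq1) hcp).
exists (s2 ++ rest); split.
- split.
  + move=> q; rewrite mem_cat => /orP [/h2G //|hq]; apply: hG; by rewrite !inE hq !orbT.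
  + by rewrite big_cat /= -h2u hu !big_cons addrA.
  + by rewrite big_cat /= -h2f hf !big_cons addrA.
  + move=> q; rewrite mem_cat => /orP [/h2b [] //|hq]; apply: hv; by rewrite !inE hq !orbT.
- move=> q; rewrite mem_cat => /orP [/h2b [] //|hq]; apply: hb.
  by rewrite (perm_mem hp) !inE hq !orbT.
- rewrite /cnt ((permP hp) (fun q => lpp le (prodq q) == Some tau)) count_cat /= e0 e1 eqxx /=.
  by rewrite add1n addSn ltnS add0n -add1n leq_add2r.
Qed.


Hypothesis hcrit : forall x y, x \in G -> y \in G -> is_crit_pair le lev x y ->
     ole lev (lppv lev (scalev (mmono K (tfac le x.2 y.2)) x.1)) (lppv lev u) ->
     std_rep le lev G (spair le x y).

Lemma main_ind tau s : Inv s -> bnd tau s -> std_rep le lev G (u, f).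
Proof.
elim/(well_founded_induction (@le_wf _ _ hle)): tau s => tau IH s.
move: {-1}(cnt tau s) (leqnn (cnt tau s)) => k; elim: k s => [|k IHk] s hk hI hb.
  by apply: (zero_case IH hI hb); apply/eqP; rewrite -leqn0.
case: (leqP (cnt tau s) k) => hk'; first exact: (IHk s hk' hI hb).
case: (boolP (ole le (Some tau) (lpp le f))) => hf.
  apply: (finish hI) => q hq; exact: (oletr hle (hb q hq) hf).
have [q0 [q1 [rest [hp e0 e1]]]] := two_tops hI hb (leq_ltn_trans (leq0n k) hk') hf.
have nz (q : term) : lpp le (prodq q) = Some tau -> q.2.2 != 0.
  move=> e; apply/eqP => h; move: e; rewrite /prodq h mulr0 lpp0 //.
have [hcp|hcp] : is_crit_pair le lev q0.2 q1.2 \/ is_crit_pair le lev q1.2 q0.2.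
  rewrite /is_crit_pair (nz _ e0) (nz _ e1) /=.
  by case/orP: (ole_total (vT hlev) (lppv lev (scalev (mmono K (tfac le q1.2.2 q0.2.2)) q1.2.1))
                                 (lppv lev (scalev (mmono K (tfac le q0.2.2 q1.2.2)) q0.2.1))) => h;
    [left|right].
- have [s' [hI' hb' hc']] := reduce hcrit hI hb hp e0 e1 hcp.
  by apply: (IHk s') => //; rewrite -ltnS; apply: leq_trans hc' hk.
- have hp' : perm_eq s (q1 :: q0 :: rest).
    by apply: (perm_trans hp); rewrite (perm_catCA [:: q0] [:: q1]).
  have [s' [hI' hb' hc']] := reduce hcrit hI hb hp' e1 e0 hcp.
  by apply: (IHk s') => //; rewrite -ltnS; apply: leq_trans hc' hk.
Qed.

Lemma main_all s : Inv s -> std_rep le lev G (u, f).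
Proof.
move=> hI; set Lp := pmap (fun q => lpp le (prodq q)) s.
case E: (seqmax le Lp) => [t|].
  apply: (main_ind (tau := t) hI) => q hq; case E2: (lpp le (prodq q)) => [a|] //.
  have : a \in Lp by rewrite mem_pmap; apply/mapP; exists q.
  by move/(seqmax_ge (hT hle)); rewrite E.
apply: (finish hI) => q hq; move: (seqmax_None (hT hle) E).
case E2: (lpp le (prodq q)) => [a|] // hnil.
have : a \in Lp by rewrite mem_pmap; apply/mapP; exists q.
by rewrite hnil.
Qed.


Lemma init : (forall i : 'I_m, (unitv K n i, fs i) \in G) -> inM fs (u, f) ->
  Inv [seq (u i, (unitv K n i, fs i)) | i <- enum 'I_m].
Proof.
move=> hun huf; split.
- by move=> q /mapP [i _ ->]; apply: hun.
- apply/ffunP => j; rewrite sum_ffunE big_map big_enum /= (bigD1 j) //= big1.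
    by rewrite /vtq /= !ffunE eqxx mulr1 addr0.
  by move=> i /negbTE hij; rewrite /vtq /= !ffunE hij mulr0.
- rewrite /inM /= in huf; rewrite -huf /dotv big_map big_enum /=; apply: eq_bigr => i _; by [].
- move=> q /mapP [i _ ->]; rewrite /vtq /=.
  apply: (lppv_le hlev) => t j; rewrite !ffunE.
  case: (eqVneq i j) => [->|hij]; last by rewrite mulr0 mcoef0 eqxx.
  by rewrite mulr1; apply: (lppv_ge hlev).
Qed.

End Main.

Theorem lemma2' (K : fieldType) (n m : nat)
    (le : rel (mon n)) (lev : rel (mon n * 'I_m))
    (le_term : term_order le) (lev_term : modterm_order lev)
    (fs : 'I_m -> mp K n) (G : seq (vec K n m * mp K n))
    (u : vec K n m) (f : mp K n) :
  (forall x, x \in G -> inM fs x) ->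
  (forall i : 'I_m, (unitv K n i, fs i) \in G) ->
  inM fs (u, f) ->
  (forall x y, x \in G -> y \in G -> is_crit_pair le lev x y ->
     ole lev (lppv lev (scalev (mmono K (tfac le x.2 y.2)) x.1)) (lppv lev u) ->
     std_rep le lev G (spair le x y)) ->
  std_rep le lev G (u, f).
Proof.
move=> _ hun huf hcrit.
exact: (@main_all K n m le lev le_term lev_term G u f hcrit _ (@init K n m lev lev_term fs G u f hun huf)).
Qed.



Theorem lemma2 (K : fieldType) (n m : nat)
    (le : rel (mon n)) (lev : rel (mon n * 'I_m))
    (le_term : term_order le) (lev_term : modterm_order lev)
    (fs : 'I_m -> mp K n) (G : seq (vec K n m * mp K n))
    (u : vec K n m) (f : mp K n) :
  (forall x, x \in G -> inM fs x) ->
  (forall i : 'I_m, (unitv K n i, fs i) \in G) ->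
  inM fs (u, f) ->
  (forall x y, x \in G -> y \in G -> is_crit_pair le lev x y ->
     ole lev (lppv lev (scalev (mmono K (tfac le x.2 y.2)) x.1)) (lppv lev u) ->
     std_rep le lev G (spair le x y)) ->
  std_rep le lev G (u, f).
Proof. exact: lemma2'. Qed.
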